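(* Let $N\ge 2$ and $K\ge 1$ be integers, $\mathbf{h}_1,\dots,\mathbf{h}_K\in\mathbb{C}^N$, $\Gamma_1,\dots,\Gamma_K>0$, $\sigma_C^2>0$, $P_T>0$, and set $\mathbf{Q}_k=\mathbf{h}_k\mathbf{h}_k^\dagger$, $\rho_k=1+\Gamma_k^{-1}$. Consider the problem $$\min_{\mathbf{W}_1,\dots,\mathbf{W}_{K+1}}\ \mathrm{tr}\Big(\big(\textstyle\sum_{k=1}^{K+1}\mathbf{W}_k\big)^{-1}\Big)$$ subject to $\rho_k\langle\mathbf{Q}_k,\mathbf{W}_k\rangle-\sum_{i=1}^{K+1}\langle\mathbf{Q}_k,\mathbf{W}_i\rangle\ge\sigma_C^2$ for $k=1,\dots,K$, $\sum_{k=1}^{K+1}\mathrm{tr}(\mathbf{W}_k)\le P_T$, and $\mathbf{W}_k\in\mathbb{H}_+^{N\times N}$ for $k=1,\dots,K+1$, where the objective is $+\infty$ if $\sum_k\mathbf{W}_k$ is singular. Suppose this problem has an optimal solution with finite objective value. Then there exists an optimal solution at which all $K+1$ inequality constraints (the $K$ SINR constraints and the power constraint) hold with equality.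
   Context: $\mathbb{H}_+^{N\times N}$ is the set of $N\times N$ Hermitian positive semidefinite matrices; $\langle\mathbf{A},\mathbf{B}\rangle=\mathrm{tr}(\mathbf{A}^\dagger\mathbf{B})$. *)

(* Defs.v *)
From HB Require Import structures.
From mathcomp Require Import all_boot all_order all_algebra.
From mathcomp Require Import complex.
From mathcomp Require Import reals constructive_ereal.
Set Implicit Arguments.
Unset Strict Implicit.
Unset Printing Implicit Defensive.
Import Order.TTheory GRing.Theory Num.Theory.
Local Open Scope ring_scope.

Section Defs.
Variable R : realType.
Local Notation C := R[i].

Definition ctr m n (A : 'M[C]_(m, n)) : 'M[C]_(n, m) := map_mx Num.conj (A^T).

Definition hpsd n (A : 'M[C]_n) : Prop :=
  ctr A = A /\ forall v : 'cV[C]_n, 0 <= (ctr v *m A *m v) 0 0.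

Definition frob n (A B : 'M[C]_n) : C := \tr (ctr A *m B).

(* index of the k-th (k < K) matrix among W_1..W_{K+1}; ord_max is W_{K+1} *)
Definition widx K (k : 'I_K) : 'I_K.+1 := widen_ord (leqnSn K) k.

Definition feasible N K (h : 'I_K -> 'cV[C]_N) (Gamma : 'I_K -> R)
    (sigma2 PT : R) (W : 'I_K.+1 -> 'M[C]_N) : Prop :=
  [/\ forall k : 'I_K,
        (real_complex R (1 + (Gamma k)^-1) * frob (h k *m ctr (h k)) (W (widx k))
         - \sum_(i < K.+1) frob (h k *m ctr (h k)) (W i)) >= real_complex R sigma2,
      \sum_(i < K.+1) \tr (W i) <= real_complex R PT
    & forall i, hpsd (W i)].

Definition objective N K (W : 'I_K.+1 -> 'M[C]_N) : \bar R :=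
  let S := \sum_(i < K.+1) W i in
  if S \in unitmx then ((complex.Re (\tr (invmx S)))%:E)%E else (+oo)%E.

Definition optimal N K (h : 'I_K -> 'cV[C]_N) (Gamma : 'I_K -> R)
    (sigma2 PT : R) (W : 'I_K.+1 -> 'M[C]_N) : Prop :=
  feasible h Gamma sigma2 PT W /\
  forall W', feasible h Gamma sigma2 PT W' -> (objective W <= objective W')%E.

End Defs.

(* Main.v *)
Require Import Defs.
From HB Require Import structures.
From mathcomp Require Import all_boot all_order all_algebra.
From mathcomp Require Import complex.
From mathcomp Require Import reals constructive_ereal.
From mathcomp Require Import ring.
Import Order.TTheory GRing.Theory Num.Theory.
Local Open Scope ring_scope.

Set Implicit Arguments.
Section H.
Variable R : realType.
Local Notation C := R[i].

Lemma ctrD m n (A B : 'M[C]_(m, n)) : ctr (A + B) = ctr A + ctr B.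
Proof. by rewrite /ctr linearD /= map_mxD. Qed.

Lemma ctrZ m n (a : C) (A : 'M[C]_(m, n)) : ctr (a *: A) = a^* *: ctr A.
Proof. by rewrite /ctr linearZ /= map_mxZ. Qed.

Lemma ctrN m n (A : 'M[C]_(m, n)) : ctr (- A) = - ctr A.
Proof. by rewrite -scaleN1r ctrZ conjCN1 scaleN1r. Qed.

Lemma ctr0 m n : ctr (0 : 'M[C]_(m, n)) = 0.
Proof. by apply/matrixP => i j; rewrite !mxE conjC0. Qed.

Lemma ctr_sum m n I (r : seq I) (P : pred I) (F : I -> 'M[C]_(m, n)) :
  ctr (\sum_(i <- r | P i) F i) = \sum_(i <- r | P i) ctr (F i).
Proof.
elim/big_rec2: _ => [|i y1 y2 _ <-]; first exact: ctr0.
by rewrite ctrD.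
Qed.

Lemma ctrM m n p (A : 'M[C]_(m, n)) (B : 'M[C]_(n, p)) :
  ctr (A *m B) = ctr B *m ctr A.
Proof. by rewrite /ctr trmx_mul map_mxM. Qed.

Lemma ctrK m n (A : 'M[C]_(m, n)) : ctr (ctr A) = A.
Proof. by apply/matrixP => i j; rewrite !mxE conjCK. Qed.

Lemma quad_add n (A B : 'M[C]_n) (v : 'cV[C]_n) :
  (ctr v *m (A + B) *m v) 0 0 = (ctr v *m A *m v) 0 0 + (ctr v *m B *m v) 0 0.
Proof. by rewrite mulmxDr mulmxDl mxE. Qed.

Lemma quad_scale n (a : C) (A : 'M[C]_n) (v : 'cV[C]_n) :
  (ctr v *m (a *: A) *m v) 0 0 = a * (ctr v *m A *m v) 0 0.
Proof. by rewrite -scalemxAr -scalemxAl mxE. Qed.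

Lemma hpsdD n (A B : 'M[C]_n) : hpsd A -> hpsd B -> hpsd (A + B).
Proof.
move=> [hA pA] [hB pB]; split; first by rewrite ctrD hA hB.
by move=> v; rewrite quad_add addr_ge0.
Qed.

Lemma hpsdZ n (a : C) (A : 'M[C]_n) : 0 <= a -> hpsd A -> hpsd (a *: A).
Proof.
move=> a0 [hA pA]; split; first by rewrite ctrZ hA geC0_conj.
by move=> v; rewrite quad_scale mulr_ge0.
Qed.

Lemma hpsd0 n : hpsd (0 : 'M[C]_n).
Proof.
split; first exact: ctr0.
by move=> v; rewrite mulmx0 mul0mx mxE.
Qed.

Lemma hpsd_sum n I (r : seq I) (P : pred I) (F : I -> 'M[C]_n) :
  (forall i, P i -> hpsd (F i)) -> hpsd (\sum_(i <- r | P i) F i).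
Proof.
move=> H; elim/big_rec: _ => [|i x Pi hx]; first exact: hpsd0.
exact: hpsdD (H _ Pi) hx.
Qed.

Lemma frobD n (A B B' : 'M[C]_n) : frob A (B + B') = frob A B + frob A B'.
Proof. by rewrite /frob mulmxDr mxtraceD. Qed.

Lemma frobZ n (A B : 'M[C]_n) a : frob A (a *: B) = a * frob A B.
Proof. by rewrite /frob -scalemxAr mxtraceZ. Qed.

Lemma frob_sum n (A : 'M[C]_n) I (r : seq I) (P : pred I) (F : I -> 'M[C]_n) :
  frob A (\sum_(i <- r | P i) F i) = \sum_(i <- r | P i) frob A (F i).
Proof.
elim/big_rec2: _ => [|i y1 y2 _ <-]; first by rewrite /frob mulmx0 mxtrace0.
by rewrite frobD.
Qed.

Lemma tr_sum n I (r : seq I) (P : pred I) (F : I -> 'M[C]_n) :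
  \tr (\sum_(i <- r | P i) F i) = \sum_(i <- r | P i) \tr (F i).
Proof.
elim/big_rec2: _ => [|i y1 y2 _ <-]; first by rewrite mxtrace0.
by rewrite mxtraceD.
Qed.

Lemma frob_rank1 n (h : 'cV[C]_n) (W : 'M[C]_n) :
  frob (h *m ctr h) W = (ctr h *m W *m h) 0 0.
Proof.
by rewrite /frob ctrM ctrK -mulmxA mxtrace_mulC trace_mx11.
Qed.

Lemma frob_ge0 n (h : 'cV[C]_n) (W : 'M[C]_n) : hpsd W -> 0 <= frob (h *m ctr h) W.
Proof. by move=> [_ pW]; rewrite frob_rank1. Qed.

Lemma ctr_delta n (i : 'I_n) : ctr (delta_mx i 0 : 'cV[C]_n) = delta_mx 0 i.
Proof.
apply/matrixP => a b; rewrite !mxE.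
by case: (_ == _); case: (_ == _); rewrite /= ?conjC1 ?conjC0.
Qed.

Lemma quad_delta n (A : 'M[C]_n) (i : 'I_n) :
  (ctr (delta_mx i 0 : 'cV[C]_n) *m A *m (delta_mx i 0 : 'cV[C]_n)) 0 0 = A i i.
Proof. by rewrite ctr_delta -rowE -colE !mxE. Qed.

Lemma diag_ge0 n (A : 'M[C]_n) (i : 'I_n) : hpsd A -> 0 <= A i i.
Proof. by move=> [_ pA]; rewrite -quad_delta. Qed.

Lemma tr_ge0 n (A : 'M[C]_n) : hpsd A -> 0 <= \tr A.
Proof. by move=> hA; rewrite /mxtrace sumr_ge0 // => i _; apply: diag_ge0. Qed.

Lemma mxE_add m n (A B : 'M[C]_(m, n)) i j : (A + B) i j = A i j + B i j.
Proof. by rewrite mxE. Qed.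
Lemma mxE_opp m n (A : 'M[C]_(m, n)) i j : (- A) i j = - A i j.
Proof. by rewrite mxE. Qed.
Lemma mxE_scale m n a (A : 'M[C]_(m, n)) i j : (a *: A) i j = a * A i j.
Proof. by rewrite mxE. Qed.

Lemma inv_diag_ge0 n (S : 'M[C]_n) (i : 'I_n) : hpsd S -> S \in unitmx ->
  0 <= (invmx S) i i.
Proof.
move=> [hS pS] uS; rewrite -quad_delta.
set e := (delta_mx i 0 : 'cV[C]_n).
set u := invmx S *m e.
have He : e = S *m u by rewrite /u mulmxA mulmxV // mul1mx.
rewrite He ctrM hS -[ctr u *m S *m invmx S]mulmxA mulmxV // mulmx1 mulmxA.
exact: pS.
Qed.

Lemma inv_tr_ge0 n (S : 'M[C]_n) : hpsd S -> S \in unitmx -> 0 <= \tr (invmx S).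
Proof. by move=> hS uS; rewrite /mxtrace sumr_ge0 // => i _; apply: inv_diag_ge0. Qed.

Lemma quad_zero n (A : 'M[C]_n) (x : 'cV[C]_n) : hpsd A ->
  (ctr x *m A *m x) 0 0 = 0 -> A *m x = 0.
Proof.
move=> [hA pA] x0.
set y := A *m x.
set nn := (ctr y *m y) 0 0.
set c := (ctr y *m A *m y) 0 0.
have c0 : 0 <= c by apply: pA.
have nE : nn = \sum_j (y j 0)^* * y j 0.
  by rewrite /nn mxE; apply: eq_bigr => j _; rewrite !mxE.
have n0 : 0 <= nn by rewrite nE sumr_ge0 // => j _; rewrite mulrC mul_conjC_ge0.
have nz : nn = 0.
  apply/eqP; apply/negPn/negP => nnz.
  have npos : 0 < nn by rewrite lt_def nnz.
  have c1 : 0 < c + 1 by rewrite ltr_wpDl.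
  set t := nn / (c + 1).
  have tpos : 0 < t by rewrite divr_gt0.
  have tc : t * c <= nn.
    rewrite /t mulrAC ler_pdivrMr // ler_pM2l //.
    by rewrite lerDl ler01.
  have tJ : t^* = t by rewrite geC0_conj // ltW.
  have := pA (x - t *: y).
  have E : ctr (x - t *: y) *m A *m (x - t *: y) =
      ctr x *m A *m x - t *: (ctr y *m y) - t *: (ctr y *m y)
      + (t * t) *: (ctr y *m A *m y).
    rewrite ctrD ctrN ctrZ tJ.
    rewrite mulmxDl mulmxDr !mulmxDl !mulNmx !mulmxN opprK.
    rewrite -!scalemxAl -!scalemxAr scalerA.
    have -> : ctr x *m A *m y = ctr y *m y by rewrite /y ctrM hA.
    have -> : ctr y *m A *m x = ctr y *m y by rewrite -mulmxA.
    by rewrite !addrA.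
  rewrite E !(mxE_add, mxE_opp, mxE_scale) -/nn -/c x0 sub0r.
  have : t * t * c <= t * nn by rewrite -mulrA ler_pM2l.
  move=> h1 h2.
  have : 0 <= - (t * nn) - t * nn + t * nn by apply: (le_trans h2); rewrite lerD2l.
  rewrite -addrA addNr addr0 oppr_ge0 => h3.
  have : 0 < t * nn by rewrite mulr_gt0.
  by move/lt_geF; rewrite h3.
have yj : forall j, y j 0 = 0.
  move=> j; move: nz; rewrite nE => /psumr_eq0P H.
  have Hge : forall i : 'I_n, true -> 0 <= (y i 0)^* * y i 0.
    by move=> i _; rewrite mulrC mul_conjC_ge0.
  have Hj := H Hge j isT.
  by apply/eqP; rewrite -mul_conjC_eq0 mulrC Hj.
by apply/matrixP => j k; rewrite (ord1 k) yj mxE.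
Qed.

Lemma tr0_hpsd n (A : 'M[C]_n) : hpsd A -> \tr A = 0 -> A = 0.
Proof.
move=> hA /eqP; rewrite psumr_eq0 => [/allP H|i _]; last exact: diag_ge0.
apply/matrixP => j i.
have : A *m (delta_mx i 0 : 'cV[C]_n) = 0.
  apply: quad_zero => //; rewrite quad_delta; apply/eqP; apply: H.
  by rewrite mem_index_enum.
rewrite -colE => /matrixP /(_ j 0); rewrite !mxE => ->.
by [].
Qed.

Lemma transfer N K (h : 'I_K -> 'cV[C]_N) (Gamma : 'I_K -> R) (sigma2 PT : R)
  (hGamma : forall k, 0 < Gamma k) (hsigma : 0 < sigma2)
  (W : 'I_K.+1 -> 'M[C]_N) :
  feasible h Gamma sigma2 PT W ->
  exists W2, [/\ feasible h Gamma sigma2 PT W2,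
     \sum_(i < K.+1) W2 i = \sum_(i < K.+1) W i &
     forall k : 'I_K,
       real_complex R (1 + (Gamma k)^-1) * frob (h k *m ctr (h k)) (W2 (widx k))
       - \sum_(i < K.+1) frob (h k *m ctr (h k)) (W2 i) = real_complex R sigma2].
Proof.
move=> [sinr pow psd].
pose rho k := real_complex R (1 + (Gamma k)^-1).
pose a k := frob (h k *m ctr (h k)) (W (widx k)).
pose s k := \sum_(i < K.+1) frob (h k *m ctr (h k)) (W i).
pose L k := rho k * a k - s k.
pose t k := (L k - real_complex R sigma2) / (rho k * a k).
pose W2 (i : 'I_K.+1) := match (insub (val i) : option 'I_K) with
  | Some k => (1 - t k) *: W i
  | None => W i + \sum_(k < K) t k *: W (widx k) end.
have W2k : forall k, W2 (widx k) = (1 - t k) *: W (widx k).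
  by move=> k; rewrite /W2 /widx /= valK.
have W2m : W2 ord_max = W ord_max + \sum_(k < K) t k *: W (widx k).
  by rewrite /W2 /= insubN // ltnn.
have sumE : \sum_(i < K.+1) W2 i = \sum_(i < K.+1) W i.
  rewrite !big_ord_recr /= W2m.
  under eq_bigr => k _ do rewrite W2k scalerBl scale1r.
  rewrite sumrB [W ord_max + _]addrC addrA subrK.
  by [].
have sig0 : 0 < real_complex R sigma2 by rewrite ltcR.
have rho0 : forall k, 0 < rho k by move=> k; rewrite ltcR addr_gt0 // invr_gt0.
have s0 : forall k, 0 <= s k by move=> k; rewrite sumr_ge0 // => i _; apply: frob_ge0.
have Lge : forall k, real_complex R sigma2 <= L k by move=> k; apply: sinr.
have raE : forall k, rho k * a k = L k + s k by move=> k; rewrite /L subrK.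
have ra0 : forall k, 0 < rho k * a k.
  move=> k; rewrite raE; apply: (lt_le_trans sig0); apply: (le_trans (Lge k)).
  by rewrite lerDl.
have t0 : forall k, 0 <= t k.
  by move=> k; rewrite divr_ge0 ?subr_ge0 // ltW.
have t1 : forall k, 0 <= 1 - t k.
  move=> k; rewrite subr_ge0 ler_pdivrMr // mul1r raE.
  apply: (le_trans (_ : _ <= L k)); first by rewrite gerBl ltW.
  by rewrite lerDl.
have sE : forall k, \sum_(i < K.+1) frob (h k *m ctr (h k)) (W2 i) = s k.
  by move=> k; rewrite -frob_sum sumE frob_sum.
have eqk : forall k,
    real_complex R (1 + (Gamma k)^-1) * frob (h k *m ctr (h k)) (W2 (widx k))
    - \sum_(i < K.+1) frob (h k *m ctr (h k)) (W2 i) = real_complex R sigma2.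
  move=> k; rewrite sE W2k frobZ -/(rho k) -/(a k).
  have nz : rho k * a k != 0 by rewrite gt_eqF.
  rewrite mulrCA mulrBl mul1r /t divfK // /L; ring.
exists W2; split => //; split.
- by move=> k; rewrite eqk.
- by rewrite -tr_sum sumE tr_sum.
- move=> i; rewrite /W2; case: insub => [k|].
    by apply: hpsdZ.
  apply: hpsdD => //; apply: hpsd_sum => k _; exact: hpsdZ.
Qed.

End H.
Unset Implicit Arguments.

Theorem theorem2 (R : realType) (N K : nat) (hN : (2 <= N)%N) (hK : (1 <= K)%N)
  (h : 'I_K -> 'cV[R[i]]_N) (Gamma : 'I_K -> R) (sigma2 PT : R)
  (hGamma : forall k, 0 < Gamma k) (hsigma : 0 < sigma2) (hPT : 0 < PT) :
  (exists W, optimal h Gamma sigma2 PT W /\ (objective W < +oo)%E) ->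
  exists W, optimal h Gamma sigma2 PT W /\
    (forall k : 'I_K,
       real_complex R (1 + (Gamma k)^-1) * frob (h k *m ctr (h k)) (W (widx k))
       - \sum_(i < K.+1) frob (h k *m ctr (h k)) (W i) = real_complex R sigma2) /\
    \sum_(i < K.+1) \tr (W i) = real_complex R PT.
Proof.
move=> [W [[feasW optW] finW]].
have feasW' := feasW.
case: feasW' => sinr pow psd.
set S := \sum_(i < K.+1) W i.
have uS : S \in unitmx.
  by move: finW; rewrite /objective -/S; case: ifP => // _; rewrite ltxx.
have hS : hpsd S by apply: hpsd_sum.
set T := \sum_(i < K.+1) \tr (W i).
have T0 : 0 <= T by rewrite sumr_ge0 // => i _; apply: tr_ge0.
have Tnz : T != 0.
  apply/negP => /eqP Teq.
  have HT := psumr_eq0P (fun j (_ : true) => tr_ge0 (psd j)) Teq.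
  have W0 : forall i, W i = 0.
    by move=> i; apply: tr0_hpsd => //; apply: HT.
  have := sinr (Ordinal hK).
  rewrite !W0; under eq_bigr => i _ do rewrite W0.
  rewrite /frob !mulmx0 !mxtrace0 mulr0 big1 // subr0.
  by rewrite lecR leNgt hsigma.
have Tpos : 0 < T by rewrite lt_def Tnz.
pose c := real_complex R PT / T.
have c1 : 1 <= c by rewrite ler_pdivlMr // mul1r.
have cpos : 0 < c by apply: lt_le_trans c1; rewrite ltr01.
pose W1 i := c *: W i.
have feas1 : feasible h Gamma sigma2 PT W1.
  split.
  - move=> k; rewrite /W1 /= frobZ.
    under eq_bigr => i _ do rewrite frobZ.
    rewrite -mulr_sumr mulrCA -mulrBr.
    apply: (le_trans (sinr k)); apply: ler_peMl => //.
    by apply: le_trans (sinr k); rewrite ltW // ltcR.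
  - rewrite /W1 /=; under eq_bigr => i _ do rewrite mxtraceZ.
    by rewrite -mulr_sumr /c divfK.
  - by move=> i; apply: hpsdZ => //; apply: ltW.
have obj1 : (objective W1 <= objective W)%E.
  rewrite /objective -/S /W1 -scaler_sumr -/S uS.
  have cu : c \is a GRing.unit by rewrite unitfE gt_eqF.
  rewrite unitmxZ // uS invmxZ ?unitmxZ // mxtraceZ lee_fin.
  have z0 := inv_tr_ge0 hS uS.
  have : c^-1 * \tr (invmx S) <= \tr (invmx S).
    by apply: ler_piMl => //; rewrite invf_le1.
  by rewrite lecE => /andP [].
have pow1 : \sum_(i < K.+1) \tr (W1 i) = real_complex R PT.
  rewrite /W1 /=; under eq_bigr => i _ do rewrite mxtraceZ.
  by rewrite -mulr_sumr /c divfK.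
have [W2 [feas2 sum2 eq2]] := transfer hGamma hsigma feas1.
exists W2; split; last split => //.
- split => // V fV.
  apply: le_trans (optW _ fV).
  by rewrite /objective sum2.
- case: feas2 => _ _ psd2.
  by rewrite -tr_sum sum2 tr_sum.
Qed.
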